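(* Let $P$ be a set of $n$ points in $\mathbb{R}^d$ and let $k$ be an integer with $2\le k\le n$. Then there exist a point $q\in\mathbb{R}^d$ and a partition of $P$ into $k$ sets $P_1,\dots,P_k$ such that \[ d(q,\operatorname{conv}P_i)\le (2+\sqrt2)\sqrt{\frac kn}\,\operatorname{diam}P\qquad\text{for every } i\in[k]. \]
   Context: $d(q,S)$ is the Euclidean distance from a point $q$ to a set $S$; $\operatorname{diam}P$ is the Euclidean diameter; $[k]=\{1,\dots,k\}$. *)

(* Defs.v *)
From HB Require Import structures.
From mathcomp Require Import all_boot all_order all_algebra.
From mathcomp Require Import boolp classical_sets reals.
Set Implicit Arguments. Unset Strict Implicit. Unset Printing Implicit Defensive.
Import Order.TTheory GRing.Theory Num.Theory.
Local Open Scope ring_scope.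
Local Open Scope classical_set_scope.

Definition enorm (R : realType) (d : nat) (x : 'rV[R]_d) : R :=
  Num.sqrt (\sum_(i < d) x 0 i ^+ 2).

Definition conv (R : realType) (d : nat) (S : set 'rV[R]_d) : set 'rV[R]_d :=
  [set x | exists (m : nat) (w : 'I_m -> R) (y : 'I_m -> 'rV[R]_d),
      (forall i, 0 <= w i) /\ \sum_(i < m) w i = 1 /\
      (forall i, S (y i)) /\ x = \sum_(i < m) w i *: y i].

Definition dist_set (R : realType) (d : nat) (q : 'rV[R]_d) (A : set 'rV[R]_d) : R :=
  inf [set enorm (q - c) | c in A].

Definition diam (R : realType) (d n : nat) (p : 'I_n -> 'rV[R]_d) : R :=
  \big[Num.max/0]_(i < n) \big[Num.max/0]_(j < n) enorm (p i - p j).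

Definition part (R : realType) (d n k : nat) (p : 'I_n -> 'rV[R]_d)
  (f : 'I_n -> 'I_k) (i : 'I_k) : set 'rV[R]_d :=
  [set p j | j in [set j | f j = i]].

(* Main.v *)
Require Import Defs.
From HB Require Import structures.
From mathcomp Require Import all_boot all_order all_algebra.
From mathcomp Require Import boolp classical_sets reals.
From mathcomp Require Import ring lra zify.
Import Order.TTheory GRing.Theory Num.Theory.
Local Open Scope ring_scope.

Module Aux.
Set Implicit Arguments. Unset Strict Implicit.

Section Vec.
Variables (R : realType) (d : nat).
Implicit Types (u v : 'rV[R]_d).

Definition sq u := \sum_(i < d) u 0 i ^+ 2.
Definition dot u v := \sum_(i < d) u 0 i * v 0 i.

Lemma sq_ge0 u : 0 <= sq u.
Proof. by apply: sumr_ge0 => i _; exact: sqr_ge0. Qed.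

Lemma enormE u : enorm u = Num.sqrt (sq u). Proof. by []. Qed.

Lemma sqD u v : sq (u + v) = sq u + 2 * dot u v + sq v.
Proof.
rewrite /sq /dot mulr_sumr -!big_split /=; apply: eq_bigr => i _.
rewrite mxE; ring.
Qed.

Lemma sqN u : sq (- u) = sq u.
Proof. by apply: eq_bigr => i _; rewrite mxE sqrrN. Qed.

Lemma dotN u v : dot u (- v) = - dot u v.
Proof. rewrite /dot -sumrN; apply: eq_bigr => i _; rewrite mxE; ring. Qed.

Lemma dotC u v : dot u v = dot v u.
Proof. by apply: eq_bigr => i _; rewrite mulrC. Qed.

Lemma sqZ a u : sq (a *: u) = a ^+ 2 * sq u.
Proof. rewrite /sq mulr_sumr; apply: eq_bigr => i _; rewrite mxE; ring. Qed.

Lemma dotZl a u v : dot (a *: u) v = a * dot u v.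
Proof. rewrite /dot mulr_sumr; apply: eq_bigr => i _; rewrite mxE; ring. Qed.

Lemma sq_eq0 u : sq u = 0 -> u = 0.
Proof.
move=> h; apply/rowP => i; rewrite mxE.
have /psumr_eq0P H : \sum_(i < d) u 0 i ^+ 2 = 0 by [].
have := H (fun j _ => sqr_ge0 (u 0 j)) i isT.
by move/eqP; rewrite sqrf_eq0 => /eqP.
Qed.

Lemma dot0l v : dot 0 v = 0.
Proof. by rewrite /dot big1 // => i _; rewrite mxE mul0r. Qed.

Lemma enorm_ge0 u : 0 <= enorm u. Proof. exact: sqrtr_ge0. Qed.

Lemma enorm_sq u : enorm u ^+ 2 = sq u.
Proof. by rewrite sqr_sqrtr // sq_ge0. Qed.

Lemma CS u v : dot u v <= enorm u * enorm v.
Proof.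
set a := enorm u; set b := enorm v.
have ha : 0 <= a := enorm_ge0 u. have hb : 0 <= b := enorm_ge0 v.
have H := sq_ge0 (b *: u - a *: v).
rewrite sqD sqN sqZ sqZ dotN dotZl dotC dotZl dotC -!enorm_sq -/a -/b in H.
have [ab0|abpos] := eqVneq (a * b) 0.
  move/eqP: ab0; rewrite mulf_eq0 => /orP [] /eqP h0.
    have : sq u = 0 by rewrite -enorm_sq -/a h0 expr0n.
    by move/sq_eq0 => ->; rewrite dot0l h0 mul0r.
  have : sq v = 0 by rewrite -enorm_sq -/b h0 expr0n.
  by move/sq_eq0 => ->; rewrite dotC dot0l h0 mulr0.
have abp : 0 < a * b by rewrite lt0r abpos mulr_ge0.
have H2 : 0 <= (a * b) * (2 * (a * b - dot u v)) by nra.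
rewrite pmulr_rge0 // in H2.
have : 0 <= a * b - dot u v by rewrite -(pmulr_rge0 _ (ltr0Sn R 1)).
by rewrite subr_ge0.
Qed.

Lemma enorm_triangle u v : enorm (u + v) <= enorm u + enorm v.
Proof.
rewrite -(ler_pXn2r (n := 2)) //; last 2 first.
- by rewrite nnegrE enorm_ge0.
- by rewrite nnegrE addr_ge0 // enorm_ge0.
rewrite enorm_sq sqD -!enorm_sq.
have := CS u v; lra.
Qed.

Lemma enormZ a u : enorm (a *: u) = `|a| * enorm u.
Proof. by rewrite /enorm -/(sq _) sqZ sqrtrM ?sqr_ge0 // sqrtr_sqr. Qed.

Lemma enormB u v : enorm (u - v) = enorm (v - u).
Proof. by rewrite -opprB /enorm -/(sq _) sqN. Qed.

End Vec.

Section Seqs.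
Variables (R : realType) (d n : nat) (p : 'I_n -> 'rV[R]_d) (D : R).
Hypothesis hD : forall x y, enorm (p x - p y) <= D.
Hypothesis hD0 : 0 <= D.

Definition ssum (s : seq 'I_n) := \sum_(j <- s) p j.
Definition mean (s : seq 'I_n) := (size s)%:R^-1 *: ssum s.

Lemma mean_perm s1 s2 : perm_eq s1 s2 -> mean s1 = mean s2.
Proof. by move=> h; rewrite /mean /ssum (perm_size h) (perm_big _ h). Qed.


Lemma halve m : forall s, size s = (m + m)%N -> exists a b, perm_eq s (a ++ b) /\
  size a = m /\ size b = m /\ sq (ssum a - ssum b) <= m%:R * D ^+ 2.
Proof.
elim: m => [|m IH] s.
  case: s => // _; exists [::], [::]; split => //; split => //; split => //.
  by rewrite /ssum big_nil subr0 mul0r /sq big1 // => i _; rewrite mxE expr0n.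
case: s => [|x [|y s]] /= hs0; [lia|lia|].
have hs : size s = (m + m)%N.
  by move: hs0; rewrite !addSn !addnS => -[].
have [a [b [hp [ha [hb hq]]]]] := IH s hs.
set v := p x - p y.
have hv : sq v <= D ^+ 2.
  rewrite -enorm_sq; have := hD x y; have := enorm_ge0 v; rewrite /v; nra.
have [hneg|hpos] := lerP (dot (ssum a - ssum b) v) 0.
- exists (x :: a), (y :: b); split.
    apply/permP => P; move/permP: hp => /(_ P); rewrite /= !count_cat /= => ->. lia.
  split; first by rewrite /= ha.
  split; first by rewrite /= hb.
  have -> : ssum (x :: a) - ssum (y :: b) = (ssum a - ssum b) + v.
    by rewrite /ssum !big_cons /v opprD addrACA addrC.
  rewrite sqD -[m.+1]addn1 natrD; lra.
- exists (y :: a), (x :: b); split.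
    apply/permP => P; move/permP: hp => /(_ P); rewrite /= !count_cat /= => ->. lia.
  split; first by rewrite /= ha.
  split; first by rewrite /= hb.
  have -> : ssum (y :: a) - ssum (x :: b) = (ssum a - ssum b) + - v.
    by rewrite /ssum !big_cons /v opprB opprD addrACA addrC addrC.
  rewrite sqD sqN dotN -[m.+1]addn1 natrD; lra.
Qed.


Lemma enorm0 : enorm (0 : 'rV[R]_d) = 0.
Proof. by rewrite /enorm big1 ?sqrtr0 // => i _; rewrite mxE expr0n. Qed.

Lemma dev s a b m : (0 < m)%N -> perm_eq s (a ++ b) -> size a = m -> size b = m ->
  sq (ssum a - ssum b) <= m%:R * D ^+ 2 ->
  enorm (mean a - mean s) <= D / (2 * Num.sqrt m%:R).
Proof.
move=> m0 hp ha hb hq.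
have hs : size s = (m + m)%N by rewrite (perm_size hp) size_cat ha hb.
have hm : (m%:R : R) != 0 by rewrite pnatr_eq0 -lt0n.
have -> : mean a - mean s = (2 * m%:R)^-1 *: (ssum a - ssum b).
  rewrite /mean /ssum (perm_big _ hp) big_cat /= hs ha.
  apply/rowP => i; rewrite !mxE natrD; field; rewrite hm /=.
  by rewrite -mulr2n mulrn_eq0.
rewrite enormZ enormE ger0_norm; last by rewrite invr_ge0 mulr_ge0 // ler0n.
have sm : 0 < Num.sqrt (m%:R : R) by rewrite sqrtr_gt0 ltr0n.
have sq2 : Num.sqrt (m%:R : R) ^+ 2 = m%:R by rewrite sqr_sqrtr // ler0n.
have h1 : Num.sqrt (sq (ssum a - ssum b)) <= Num.sqrt (m%:R) * D.
  by rewrite -(ger0_norm hD0) -sqrtr_sqr -sqrtrM ?ler0n // ler_sqrt // mulr_ge0 ?ler0n // sqr_ge0.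
apply: (le_trans (y := (2 * m%:R)^-1 * (Num.sqrt m%:R * D))).
  by rewrite ler_wpM2l // invr_ge0 mulr_ge0 // ler0n.
rewrite le_eqVlt; apply/orP; left; apply/eqP.
move: sq2 sm; set x := Num.sqrt _ => sq2 sm; rewrite -sq2; field; rewrite gt_eqF //.
Qed.

Definition alpha : R := (2 + Num.sqrt 2) / 2.

Lemma alg_aux (x y : R) : y ^+ 2 = 2 -> x != 0 -> y != 0 ->
  (2 + y) / 2 * (x^-1 - (y * x)^-1) = (2 * x)^-1.
Proof.
move=> s2 hx hy.
have E : (2 + y) / 2 * (x^-1 - (y * x)^-1) = (y ^+ 2 + y - 2) / (2 * y * x).
  by field; rewrite hx hy.
rewrite E s2 (_ : 2 + y - 2 = y); last ring. by field; rewrite hx hy.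
Qed.

Lemma step_alg (x : R) : 0 < x -> alpha * (x^-1 - (Num.sqrt 2 * x)^-1) = (2 * x)^-1.
Proof.
move=> x0; have s2 : Num.sqrt (2:R) ^+ 2 = 2 by rewrite sqr_sqrtr // ler0n.
have s0 : 0 < Num.sqrt (2:R) by rewrite sqrtr_gt0 ltr0n.
by rewrite /alpha; apply: alg_aux; rewrite ?gt_eqF.
Qed.

Lemma dyadic r t : (0 < r)%N -> forall s, uniq s -> size s = (2 ^ t * r)%N ->
  exists g : 'I_n -> nat, (forall j, (g j < 2 ^ t)%N) /\
  forall l, (l < 2 ^ t)%N -> size [seq j <- s | g j == l] = r /\
   enorm (mean [seq j <- s | g j == l] - mean s) <=
     alpha * D * ((Num.sqrt r%:R)^-1 - (Num.sqrt (size s)%:R)^-1).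
Proof.
move=> r0; elim: t => [|t IH] s us hs.
  exists (fun _ => 0%N); split => // l; rewrite expn0 ltnS leqn0 => /eqP ->.
  have -> : [seq j <- s | 0%N == 0%N] = s by rewrite filter_predT.
  by rewrite hs mul1n !subrr mulr0 enorm0.
have m0 : (0 < 2 ^ t * r)%N by rewrite muln_gt0 expn_gt0 r0.
have hs' : size s = (2 ^ t * r + 2 ^ t * r)%N by rewrite hs expnS; lia.
have [a [b [hp [ha [hb hq]]]]] := halve hs'.
have uab : uniq (a ++ b) by rewrite -(perm_uniq hp).
move: (uab); rewrite cat_uniq => /and3P [ua /hasPn nab ub].
have [ga [gal gaP]] := IH a ua ha.
have [gb [gbl gbP]] := IH b ub hb.
exists (fun j => if j \in a then ga j else (2 ^ t + gb j)%N); split.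
  by move=> j; case: ifP => _; rewrite expnS; [have := ga j; have := gal j | have := gbl j]; lia.
have da := dev m0 hp ha hb hq.
have db : enorm (mean b - mean s) <= D / (2 * Num.sqrt (2 ^ t * r)%:R).
  apply: (dev (a := b) (b := a) m0) => //; first by rewrite perm_sym perm_catC perm_sym.
  by rewrite -opprB sqN.
have sm : 0 < Num.sqrt ((2 ^ t * r)%:R : R) by rewrite sqrtr_gt0 ltr0n.
have hsq : Num.sqrt ((size s)%:R : R) = Num.sqrt 2 * Num.sqrt (2 ^ t * r)%:R.
  rewrite hs' (_ : ((2 ^ t * r + 2 ^ t * r)%N%:R : R) = 2 * (2 ^ t * r)%:R); last by rewrite natrD; ring.
  by rewrite sqrtrM ?ler0n.
have key : forall (c x : seq 'I_n), enorm (mean c - mean s) <= enorm (mean c - mean x) + D / (2 * Num.sqrt (2 ^ t * r)%:R) ->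
   enorm (mean c - mean x) <= alpha * D * ((Num.sqrt r%:R)^-1 - (Num.sqrt (2 ^ t * r)%:R)^-1) ->
   enorm (mean c - mean s) <= alpha * D * ((Num.sqrt r%:R)^-1 - (Num.sqrt (size s)%:R)^-1).
  move=> c x h1 h2; apply: (le_trans h1).
  have e := step_alg sm.
  rewrite hsq; set u := Num.sqrt _ in e h2 *; set w := (Num.sqrt r%:R)^-1 in h2 *.
  have -> : alpha * D * (w - (Num.sqrt 2 * u)^-1) =
     alpha * D * (w - u^-1) + D * (alpha * (u^-1 - (Num.sqrt 2 * u)^-1)) by ring.
  rewrite e; lra.
have tri : forall c x, enorm (mean c - mean s) <= enorm (mean c - mean x) + enorm (mean x - mean s).
  move=> c x; have -> : mean c - mean s = (mean c - mean x) + (mean x - mean s) by rewrite addrA subrK.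
  exact: enorm_triangle.
move=> l hl.
pose G := fun j => if j \in a then ga j else (2 ^ t + gb j)%N.
have hperm : perm_eq [seq j <- s | G j == l] [seq j <- a ++ b | G j == l] by apply: perm_filter.
case: (ltnP l (2 ^ t)) => hlt.
- have Ef : [seq j <- a ++ b | G j == l] = [seq j <- a | ga j == l].
    rewrite filter_cat (@eq_in_filter _ (fun j => G j == l) pred0 b) ?filter_pred0 ?cats0.
      by apply: eq_in_filter => j ja; rewrite /G ja.
    move=> j jb; rewrite /G /= (negbTE (nab j jb)); apply/negbTE/eqP => h; clear -h hlt; lia.
  have [sz ev] := gaP l hlt.
  split; first by rewrite (perm_size hperm) Ef.
  rewrite (mean_perm hperm) Ef; apply: (key _ a); last by rewrite -ha.
  by apply: (le_trans (tri _ a)); rewrite lerD2l.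
- have hl' : (l - 2 ^ t < 2 ^ t)%N by move: hl; rewrite expnS; clear; lia.
  have Ef : [seq j <- a ++ b | G j == l] = [seq j <- b | gb j == (l - 2 ^ t)%N].
    rewrite filter_cat (@eq_in_filter _ (fun j => G j == l) pred0 a) ?filter_pred0 /=.
      by apply: eq_in_filter => j jb; rewrite /G (negbTE (nab j jb)); apply/idP/idP => /eqP h; apply/eqP; clear -h hlt; lia.
    move=> j ja; rewrite /G /= ja; apply/negbTE/eqP => h; have := gal j; clear -h hlt; lia.
  have [sz ev] := gbP _ hl'.
  split; first by rewrite (perm_size hperm) Ef.
  rewrite (mean_perm hperm) Ef; apply: (key _ b); last by rewrite -hb.
  by apply: (le_trans (tri _ b)); rewrite lerD2l.
Qed.
End Seqs.



Lemma key (R : realType) (d n k : nat) (p : 'I_n -> 'rV[R]_d)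
  (q : 'rV[R]_d) (L : 'I_k -> seq 'I_n) (B : R) (i0 : 'I_k) :
  (forall i, L i != [::]) ->
  (forall i i' j, j \in L i -> j \in L i' -> i = i') ->
  (forall i, enorm (q - mean p (L i)) <= B) ->
  exists f : 'I_n -> 'I_k, (forall i, exists j, f j = i) /\
    forall i, dist_set q (conv (part p f i)) <= B.
Proof.
move=> hne hdis hB.
pose f j := if [pick i | j \in L i] is Some i then i else i0.
have fL : forall i j, j \in L i -> f j = i.
  move=> i j hj; rewrite /f; case: pickP => [i' hi'|h]; first exact: hdis hi' hj.
  by rewrite h in hj.
exists f; split.
  move=> i; case E: (L i) (hne i) => [|j s] // _; exists j; apply: fL.
  by rewrite E mem_head.
move=> i; rewrite /dist_set.
set E := (X in inf X).
have hlb : has_lbound E by exists 0 => y [c _ <-]; exact: enorm_ge0.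
apply: le_trans (hB i).
apply: (ge_inf hlb).
exists (mean p (L i)) => //.
case E0: (L i) (hne i) => [|j0 s0] // _.
set m := size (L i).
have m0 : (m%:R : R) != 0 by rewrite pnatr_eq0 /m E0.
exists m, (fun _ => m%:R^-1), (fun o : 'I_m => p (nth j0 (L i) o)).
split; first by move=> _; rewrite invr_ge0 ler0n.
split; first by rewrite sumr_const card_ord -(mulr_natr (m%:R^-1)) mulVf.
split.
  move=> o; exists (nth j0 (L i) o) => //; apply: fL; apply: mem_nth.
  exact: ltn_ord.
rewrite /mean /ssum -/m -scaler_sumr (big_nth j0) big_mkord.
by rewrite /m E0.
Qed.

Lemma half_le (R : realType) (n r k : nat) : (0 < n)%N -> (0 < r)%N -> (n <= 4 * r * k)%N ->
  2^-1 * (Num.sqrt (r%:R : R))^-1 <= Num.sqrt (k%:R / n%:R).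
Proof.
move=> n0 r0 hn.
have sr : 0 < Num.sqrt (r%:R : R) by rewrite sqrtr_gt0 ltr0n.
rewrite -(ler_pXn2r (n := 2)) //; last 2 first.
- by rewrite nnegrE mulr_ge0 // invr_ge0 ltW.
- by rewrite nnegrE sqrtr_ge0.
rewrite sqr_sqrtr; last by rewrite divr_ge0 // ler0n.
have hn' : (n%:R : R) <= 4 * r%:R * k%:R.
  by rewrite -!natrM ler_nat.
have rp : (0 : R) < r%:R by rewrite ltr0n.
have np : (0 : R) < n%:R by rewrite ltr0n.
have -> : (k%:R / n%:R : R) = 2 ^- 2 * r%:R^-1 + (4 * r%:R * k%:R - n%:R) / (4 * r%:R * n%:R).
  by field; rewrite !gt_eqF.
rewrite exprMn !exprVn sqr_sqrtr ?ler0n // lerDl divr_ge0 //; first by rewrite subr_ge0.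
by rewrite !mulr_ge0 // ltW.
Qed.

Lemma le_bigmax0 (R : realType) (m : nat) (F : 'I_m -> R) i :
  F i <= \big[Num.max/0]_(j < m) F j.
Proof. by rewrite (bigD1 i) //= le_max lexx. Qed.

Lemma aux1 (R : realType) (x y : R) : 2^-1 <= x -> 0 <= y -> 1 <= (2 + y) * x.
Proof. move=> h1 h2; nra. Qed.

End Aux.
Import Aux.

Theorem theorem1p3 (R : realType) (d n k : nat) (p : 'I_n -> 'rV[R]_d)
  (p_inj : injective p) (hk2 : (2 <= k)%N) (hkn : (k <= n)%N) :
  exists (q : 'rV[R]_d) (f : 'I_n -> 'I_k),
    (forall i : 'I_k, exists j : 'I_n, f j = i) /\
    (forall i : 'I_k,
       dist_set q (conv (part p f i)) <=
       (2 + Num.sqrt 2) * Num.sqrt (k%:R / n%:R) * diam p).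
Proof.
set D := diam p.
have hD : forall x y, enorm (p x - p y) <= D.
  move=> x y; rewrite /D /diam.
  apply: le_trans (le_bigmax0 _ x).
  exact: (le_bigmax0 (fun j => enorm (p x - p j)) y).
have k0 : (0 < k)%N by apply: leq_trans hk2.
have n0 : (0 < n)%N by apply: leq_trans hkn.
pose i0 : 'I_k := Ordinal k0.
pose j0 : 'I_n := Ordinal n0.
have hD0 : 0 <= D by apply: le_trans (hD j0 j0); exact: enorm_ge0.
have s2 : 0 <= Num.sqrt (2 : R) by exact: sqrtr_ge0.
set a := trunc_log 2 k.
have /andP [ha1 ha2] : (2 ^ a <= k < 2 ^ a.+1)%N by exact: (trunc_log_bounds (isT : (1 < 2)%N) k0).
set K := (2 ^ a.+1)%N.
have hK2 : (K <= 2 * k)%N by rewrite /K expnS leq_mul2l.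
have K0 : (0 < K)%N by rewrite expn_gt0.
have fin : forall B, (forall q (L : 'I_k -> seq 'I_n),
    (forall i, L i != [::]) ->
    (forall i i' j, j \in L i -> j \in L i' -> i = i') ->
    (forall i, enorm (q - mean p (L i)) <= B) ->
    B <= (2 + Num.sqrt 2) * Num.sqrt (k%:R / n%:R) * D ->
    exists (q : 'rV[R]_d) (f : 'I_n -> 'I_k),
    (forall i : 'I_k, exists j : 'I_n, f j = i) /\
    (forall i : 'I_k,
       dist_set q (conv (part p f i)) <=
       (2 + Num.sqrt 2) * Num.sqrt (k%:R / n%:R) * D)).
  move=> B q L h1 h2 h3 h4.
  have [f [fs fd]] := key i0 h1 h2 h3.
  by exists q, f; split => // i; apply: le_trans (fd i) h4.
case: (leqP K n) => hKn.
- set r := (n %/ K)%N.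
  have r0 : (0 < r)%N by rewrite divn_gt0.
  set s := take (K * r) (enum 'I_n).
  have us : uniq s by rewrite take_uniq // enum_uniq.
  have hs : size s = (2 ^ a.+1 * r)%N.
    rewrite size_takel // size_enum_ord mulnC; exact: leq_divM.
  have [g [gl gP]] := dyadic hD hD0 r0 us hs.
  apply: (fin (alpha R * D * (Num.sqrt (r%:R))^-1) (mean p s)
              (fun i : 'I_k => [seq j <- s | g j == i])).
  + move=> i; have [sz _] := gP i (leq_trans (ltn_ord i) (ltnW ha2)).
    by rewrite -size_eq0 sz -lt0n.
  + move=> i i' j; rewrite !mem_filter => /andP [/eqP h1 _] /andP [/eqP h2 _].
    by apply: val_inj; rewrite /= -h1 -h2.
  + move=> i; have [_ ev] := gP i (leq_trans (ltn_ord i) (ltnW ha2)).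
    rewrite enormB; apply: (le_trans ev).
    rewrite ler_wpM2l ?mulr_ge0 ?addr_ge0 ?invr_ge0 ?ler0n //.
    by rewrite gerBl invr_ge0 sqrtr_ge0.
  + have hn : (n <= 4 * r * k)%N.
      have := ltn_ceil n K0; rewrite -/r => h.
      move: h r0 hK2; clearbody r K; clear; nia.
    have hh := @half_le R _ _ _ n0 r0 hn.
    have -> : alpha R * D / Num.sqrt r%:R = ((2 + Num.sqrt 2) * (2^-1 / Num.sqrt r%:R)) * D.
      by rewrite /alpha; ring.
    apply: ler_wpM2r => //; apply: ler_wpM2l => //; exact: addr_ge0.
- apply: (fin D (p j0) (fun i : 'I_k => [:: widen_ord hkn i])).
  + by [].
  + move=> i i' j; rewrite !inE => /eqP -> /eqP h; apply: val_inj.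
    by move: h => /(congr1 val).
  + move=> i; rewrite /mean /ssum big_cons big_nil addr0 /= invr1 scale1r; exact: hD.
  + have hn : (n <= 4 * 1 * k)%N by move: hKn hK2; clearbody K; clear; lia.
    have hh := @half_le R _ _ _ n0 (isT : (0 < 1)%N) hn.
    rewrite sqrtr1 invr1 mulr1 in hh.
    rewrite -[X in X <= _]mul1r ler_wpM2r //.
    exact: aux1 hh s2.
Qed.
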